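(* Let $L\in\mathbb{R}^{n\times n}$ be a real symmetric positive semidefinite matrix, let $U_k\in\mathbb{R}^{n\times k}$ have orthonormal columns that are eigenvectors of $L$, and let $\mathrm{span}(U_k)$ denote its column space. Let $\beta>0$, let $\mathrm{E},\mathrm{E}_{\text{model}}\in\mathbb{R}$, and set $a=\mathrm{E}-\mathrm{E}_{\text{model}}$. For $\phi,\rho\in\mathbb{R}^n$ define \[ \mathcal{L}(\phi,\rho)=\beta\,\|L\phi-\rho\|_2^2+\Big(a+\tfrac12\,\phi^\top\rho\Big)^2 . \] Fix $\phi\in\mathrm{span}(U_k)$. Then the unique minimizer of $\rho\mapsto\mathcal{L}(\phi,\rho)$ over $\mathrm{span}(U_k)$ is \[ \rho^\star(\phi)=L\phi-t^\star(\phi)\,\phi,\qquad t^\star(\phi)=\frac{a+\frac12\,\phi^\top L\phi}{2\beta+\frac12\,\|\phi\|_2^2}. \]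
   Context: $\mathcal{L}$ is the (squared, $L^2$) surrogate training objective combining a Poisson-equation residual $\|L\phi-\rho\|^2$ weighted by $\beta$ with a squared energy term involving the electrostatic energy $\frac12\phi^\top\rho$; $\phi$ plays the role of a potential and $\rho$ of charges on the nodes of a graph with Laplacian $L$. *)

(* Defs.v *)
From HB Require Import structures.
From mathcomp Require Import all_boot all_order all_algebra.
From mathcomp Require Import all_reals.
Set Implicit Arguments. Unset Strict Implicit. Unset Printing Implicit Defensive.
Import Order.TTheory GRing.Theory Num.Theory.
Local Open Scope ring_scope.

Definition dotv (R : realType) (n : nat) (u v : 'cV[R]_n) : R :=
  \sum_(i < n) u i 0 * v i 0.

Definition sqnorm (R : realType) (n : nat) (v : 'cV[R]_n) : R := dotv v v.

Definition symmetric_mx (R : realType) (n : nat) (L : 'M[R]_n) : Prop := L^T = L.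

Definition psd_mx (R : realType) (n : nat) (L : 'M[R]_n) : Prop :=
  forall x : 'cV[R]_n, 0 <= dotv x (L *m x).

Definition orthonormal_cols (R : realType) (n k : nat) (U : 'M[R]_(n, k)) : Prop :=
  U^T *m U = 1%:M.

Definition eigvec_cols (R : realType) (n k : nat) (L : 'M[R]_n) (U : 'M[R]_(n, k))
  : Prop :=
  forall j : 'I_k, exists lam : R, L *m col j U = lam *: col j U.

Definition in_span (R : realType) (n k : nat) (U : 'M[R]_(n, k)) (x : 'cV[R]_n)
  : Prop := exists c : 'cV[R]_k, x = U *m c.

Definition lossL (R : realType) (n : nat) (L : 'M[R]_n) (beta a : R)
  (phi rho : 'cV[R]_n) : R :=
  beta * sqnorm (L *m phi - rho) + (a + 2^-1 * dotv phi rho) ^+ 2.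

Definition tstar (R : realType) (n : nat) (L : 'M[R]_n) (beta a : R)
  (phi : 'cV[R]_n) : R :=
  (a + 2^-1 * dotv phi (L *m phi)) / (2 * beta + 2^-1 * sqnorm phi).

Definition rhostar (R : realType) (n : nat) (L : 'M[R]_n) (beta a : R)
  (phi : 'cV[R]_n) : 'cV[R]_n :=
  L *m phi - tstar L beta a phi *: phi.

(* Main.v *)
Require Import Defs.
From HB Require Import structures.
From mathcomp Require Import all_boot all_order all_algebra.
From mathcomp Require Import all_reals.
From mathcomp Require Import ring lra.
Import Order.TTheory GRing.Theory Num.Theory.
Local Open Scope ring_scope.

Section Aux.
Variables (R : realType) (n : nat).
Implicit Types u v w : 'cV[R]_n.

Lemma dotvC u v : dotv u v = dotv v u.
Proof. by rewrite /dotv; apply: eq_bigr => i _; rewrite mulrC. Qed.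

Lemma dotvDr u v w : dotv u (v + w) = dotv u v + dotv u w.
Proof. by rewrite /dotv -big_split; apply: eq_bigr => i _; rewrite mxE mulrDr. Qed.

Lemma dotvNr u v : dotv u (- v) = - dotv u v.
Proof. by rewrite /dotv -sumrN; apply: eq_bigr => i _; rewrite mxE mulrN. Qed.

Lemma dotvZr u v c : dotv u (c *: v) = c * dotv u v.
Proof. by rewrite /dotv mulr_sumr; apply: eq_bigr => i _; rewrite mxE mulrCA. Qed.

Lemma dotvDl u v w : dotv (v + w) u = dotv v u + dotv w u.
Proof. by rewrite dotvC dotvDr !(dotvC u). Qed.
Lemma dotvNl u v : dotv (- v) u = - dotv v u.
Proof. by rewrite dotvC dotvNr dotvC. Qed.
Lemma dotvZl u v c : dotv (c *: v) u = c * dotv v u.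
Proof. by rewrite dotvC dotvZr dotvC. Qed.

Lemma sqnorm_ge0 u : 0 <= sqnorm u.
Proof. by rewrite /sqnorm /dotv sumr_ge0 // => i _; rewrite -expr2 sqr_ge0. Qed.

Lemma sqnorm_eq0 u : sqnorm u = 0 -> u = 0.
Proof.
move=> /eqP; rewrite /sqnorm /dotv psumr_eq0 => [H|i _]; last by rewrite -expr2 sqr_ge0.
apply/matrixP => i j; rewrite ord1 mxE.
by have := allP H i (mem_index_enum _); rewrite /= mulf_eq0 orbb => /eqP.
Qed.
End Aux.
Arguments dotvC {R n}.

Theorem theorem1 (R : realType) (n k : nat) (L : 'M[R]_n) (U : 'M[R]_(n, k))
  (beta E Emodel : R) (phi : 'cV[R]_n) :
  symmetric_mx L -> psd_mx L ->
  orthonormal_cols U -> eigvec_cols L U ->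
  0 < beta ->
  in_span U phi ->
  let a := E - Emodel in
  in_span U (rhostar L beta a phi) /\
  (forall rho : 'cV[R]_n, in_span U rho ->
     lossL L beta a phi (rhostar L beta a phi) <= lossL L beta a phi rho) /\
  (forall rho : 'cV[R]_n, in_span U rho ->
     lossL L beta a phi rho = lossL L beta a phi (rhostar L beta a phi) ->
     rho = rhostar L beta a phi).
Proof.
move=> _ _ _ Heig Hb [c Hc] a.
set t := tstar L beta a phi.
have Ht : t * (2 * beta + 2^-1 * sqnorm phi) = a + 2^-1 * dotv phi (L *m phi).
  rewrite /t /tstar mulrVK // unitfE; apply: lt0r_neq0.
  apply: ltr_pwDl; first by rewrite mulr_gt0. by apply: mulr_ge0; [rewrite invr_ge0|exact: sqnorm_ge0].
have key : forall rho, lossL L beta a phi rho =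
   lossL L beta a phi (rhostar L beta a phi) +
   beta * sqnorm (rho - rhostar L beta a phi) +
   (2^-1 * dotv phi (rho - rhostar L beta a phi)) ^+ 2.
  move=> rho; rewrite /lossL /rhostar -/t /sqnorm.
  set w := L *m phi.
  rewrite !(dotvDr, dotvNr, dotvZr, dotvDl, dotvNl, dotvZl) !opprD !opprK.
  rewrite ?(dotvDr, dotvNr, dotvZr, dotvDl, dotvNl, dotvZl).
  rewrite (dotvC rho w) (dotvC rho phi) (dotvC w phi).
  have -> : a = t * (2 * beta + 2^-1 * sqnorm phi) - 2^-1 * dotv phi w by rewrite Ht; ring.
  rewrite /sqnorm. by field.
split; last split.
- rewrite /rhostar Hc.
  have span0 : in_span U 0 by exists 0; rewrite mulmx0.
  have spanD : forall x y, in_span U x -> in_span U y -> in_span U (x + y).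
    by move=> x y [cx ->] [cy ->]; exists (cx + cy); rewrite mulmxDr.
  have spanN : forall x, in_span U x -> in_span U (- x).
    by move=> x [cx ->]; exists (- cx); rewrite mulmxN.
  have spanZ : forall s x, in_span U x -> in_span U (s *: x).
    by move=> s x [cx ->]; exists (s *: cx); rewrite scalemxAr.
  apply: (spanD); last by apply/spanN/spanZ; exists c.
  have -> : U *m c = \sum_j c j 0 *: col j U.
    apply/matrixP => i j; rewrite ord1 !mxE summxE; apply: eq_bigr => l _.
    by rewrite !mxE mulrC.
  rewrite mulmx_sumr; apply: (@big_ind _ (fun x => in_span U x)) => [|x y Hx Hy|j _]; [exact: span0 | exact: (spanD x y Hx Hy) | ].
  rewrite -scalemxAr; apply: (spanZ).
  have [lam ->] := Heig j; apply: (spanZ).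
  by exists (delta_mx j 0); rewrite -colE.
- move=> rho _; rewrite (key rho) -addrA lerDl; apply: addr_ge0; last exact: sqr_ge0.
  by apply: mulr_ge0; [exact: ltW | exact: sqnorm_ge0].
- move=> rho _; rewrite (key rho) -addrA => /eqP; rewrite -subr_eq0 addrAC subrr add0r.
  rewrite paddr_eq0; last exact: sqr_ge0; last by apply: mulr_ge0; [exact: ltW | exact: sqnorm_ge0].
  case/andP => /eqP H _; apply/eqP; rewrite -subr_eq0; apply/eqP/sqnorm_eq0.
  by move: H => /eqP; rewrite mulf_eq0 gt_eqF //= => /eqP.
Qed.
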